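(* For every pair of integers $0\le m\le n$ and every $\sigma\ge0$, the system $(\ast)$ has a unique solution $(L,M,N)$ with $L\in(-\pi/2,0]$, $M,N\in[0,\pi/2)$. Moreover: (1) For $0\le m<n$ and $\sigma>0$, $L,N=O(\sigma/n)$ with an absolute implied constant. (2) Additionally, $M=O(\sigma/m)$ uniformly for $1\le m\le n$, $\sigma>0$; and for $m=0<n$, $M=O(\sqrt\sigma)$ for all sufficiently small $\sigma>0$, with an absolute implied constant. (3) For $m=n=0$, $|L|,|M|,|N|\ll\sqrt\sigma$; in particular $L,M,N$ are continuous at $\sigma=0$.
   Context: Fix $r>0$. For integers $m,n\ge0$ and $\sigma\ge0$, the system $(\ast)$ in the unknowns $L,M,N$ is $$\big(2L-M-N-(m+n)\pi\big)\tan L=3r\sigma,\quad \big(2M-N-L+m\pi\big)\tan M=3r\sigma,\quad \big(2N-L-M+n\pi\big)\tan N=3r\sigma .$$ *)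

(* Defs.v *)
From Stdlib Require Import Reals.
Open Scope R_scope.

Definition sys (r : R) (m n : nat) (s L M N : R) : Prop :=
  (2*L - M - N - (INR m + INR n) * PI) * tan L = 3 * r * s /\
  (2*M - N - L + INR m * PI) * tan M = 3 * r * s /\
  (2*N - L - M + INR n * PI) * tan N = 3 * r * s.

Definition in_range (L M N : R) : Prop :=
  - (PI / 2) < L <= 0 /\ 0 <= M < PI / 2 /\ 0 <= N < PI / 2.

(* Main.v *)
Require Import Defs.
From Stdlib Require Import Reals Lra Psatz ClassicalEpsilon.
Open Scope R_scope.

Lemma le_div_aux x y z : 0 < z -> x * z <= y -> x <= y / z.
Proof.
  intros Hz H. replace x with ((x*z)/z) by (field; lra).
  unfold Rdiv. apply Rmult_le_compat_r; [left; apply Rinv_0_lt_compat; lra | lra].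
Qed.

Lemma tan_ge_x x : 0 <= x < PI/2 -> x <= tan x.
Proof.
  intros [H0 H1]. destruct (Req_dec x 0) as [->|Hx]; [rewrite tan_0; lra|].
  destruct (MVT_cor2 tan (fun c => 1 + tan c ^ 2) 0 x) as [c [Hc1 Hc2]]; [lra| |].
  - intros c Hc. assert (Pr : -PI/2 < c < PI/2) by lra.
    apply (derive_pt_eq_1 _ _ _ (derivable_pt_tan c Pr)). apply derive_pt_tan.
  - rewrite tan_0 in Hc1. assert (0 <= tan c ^ 2) by (apply pow2_ge_0). nra.
Qed.

Lemma tan_le_x x : - (PI/2) < x <= 0 -> tan x <= x.
Proof.
  intros H. assert (h := tan_ge_x (-x) ltac:(lra)). rewrite tan_neg in h. lra.
Qed.

Lemma tan_pos x : 0 < x < PI/2 -> 0 < tan x.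
Proof. intros; apply tan_gt_0; lra. Qed.

Lemma tan_incr x y : 0 <= x -> x < y -> y < PI/2 -> tan x < tan y.
Proof. intros; apply tan_increasing; lra. Qed.

Lemma lip_cont f K : 0 < K -> (forall x y, Rabs (f x - f y) <= K * Rabs (x - y)) -> continuity f.
Proof.
  intros HK H x. unfold continuity_pt, continue_in, limit1_in, limit_in. intros eps Heps.
  exists (eps / K). split. { apply Rdiv_lt_0_compat; lra. }
  intros y [_ Hy]. simpl in *. unfold R_dist in *.
  eapply Rle_lt_trans; [apply H|].
  replace eps with (K * (eps/K)) by (field; lra). apply Rmult_lt_compat_l; lra.
Qed.

Lemma atan2_gt : PI/3 < atan 2.
Proof.
  assert (h : sqrt 3 < 2).
  { replace 2 with (sqrt 4). apply sqrt_lt_1_alt; lra.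
    replace 4 with (2*2) by lra. rewrite sqrt_square; lra. }
  rewrite <- tan_PI3 in h. apply atan_increasing in h.
  rewrite atan_tan in h; [lra|]. split; assert (PI>0) by apply PI_RGT_0; lra.
Qed.

Lemma solve1 a k t : 0 < a -> t - k <= PI ->
  exists x, 0 < x < PI/2 /\ (3*x + k - t) * tan x = a.
Proof.
  intros Ha Ht.
  set (g := fun y => (3 * atan y + k - t) * y - a).
  assert (Hc : continuity g).
  { unfold g. apply continuity_minus; [apply continuity_mult|apply continuity_const; intros ??; reflexivity].
    - apply continuity_minus; [apply continuity_plus|apply continuity_const; intros ??; reflexivity].
      + apply continuity_scal. apply derivable_continuous. intro; apply derivable_pt_atan.
      + apply continuity_const; intros ??; reflexivity.
    - apply derivable_continuous, derivable_id. }
  set (c0 := 3 * atan 2 - PI).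
  assert (Hc0 : 0 < c0) by (unfold c0; generalize atan2_gt; lra).
  set (Y := 2 + a / c0).
  assert (HY : 2 <= Y) by (unfold Y; assert (0 < a/c0) by (apply Rdiv_lt_0_compat; lra); lra).
  assert (Hat : atan 2 <= atan Y).
  { destruct (Req_dec Y 2) as [->|]; [lra|]. left; apply atan_increasing; lra. }
  assert (g0 : g 0 < 0) by (unfold g; lra).
  assert (gY : 0 < g Y).
  { unfold g. assert (c0 <= 3 * atan Y + k - t) by (unfold c0 in *; lra).
    assert (c0 * Y <= (3 * atan Y + k - t) * Y) by (apply Rmult_le_compat_r; lra).
    assert (c0 * Y = 2 * c0 + a) by (unfold Y; field; lra). lra. }
  destruct (IVT g 0 Y Hc ltac:(lra) g0 gY) as [z [Hz Hgz]].
  assert (Hz0 : z <> 0) by (intro; subst; lra).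
  exists (atan z). rewrite tan_atan. split.
  - split; [|generalize (atan_bound z); lra].
    rewrite <- atan_0. apply atan_increasing; lra.
  - unfold g in Hgz; lra.
Qed.

Lemma mono a k t t' x x' : 0 < a -> 0 < x < PI/2 -> 0 < x' < PI/2 ->
  (3*x + k - t) * tan x = a -> (3*x' + k - t') * tan x' = a -> t <= t' ->
  x <= x' /\ (x = x' \/ 3 * (x' - x) < t' - t).
Proof.
  intros Ha Hx Hx' E E' Htt.
  assert (T := tan_pos x Hx). assert (T' := tan_pos x' Hx').
  assert (C : 0 < 3*x + k - t) by nra.
  assert (C' : 0 < 3*x' + k - t') by nra.
  assert (Hle : x <= x').
  { destruct (Rle_or_lt x x') as [|Hlt]; [assumption|exfalso].
    assert (tan x' < tan x) by (apply tan_incr; lra).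
    destruct (Rle_or_lt (3*x' + k - t') (3*x + k - t)).
    - assert ((3*x' + k - t') * tan x' < (3*x + k - t) * tan x) by nra. lra.
    - lra. }
  split; [assumption|].
  destruct (Req_dec x x') as [|Hne]; [left; assumption|right].
  assert (tan x < tan x') by (apply tan_incr; lra).
  destruct (Rlt_or_le (3 * (x' - x)) (t' - t)) as [|Hge]; [assumption|exfalso].
  assert ((3*x + k - t) * tan x < (3*x' + k - t') * tan x') by nra. lra.
Qed.

Definition Pf a k t := epsilon (inhabits 0) (fun x => 0 < x < PI/2 /\ (3*x+k-t)*tan x = a).

Lemma Pf_spec a k t : 0 < a -> t - k <= PI -> 0 < Pf a k t < PI/2 /\ (3*Pf a k t+k-t)*tan (Pf a k t) = a.
Proof. intros. unfold Pf. apply epsilon_spec. apply solve1; assumption. Qed.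

Lemma Pf_lip a k t t' : 0 < a -> t - k <= PI -> t' - k <= PI ->
  Rabs (Pf a k t - Pf a k t') <= /3 * Rabs (t - t').
Proof.
  intros Ha H H'. destruct (Pf_spec a k t Ha H) as [B E].
  destruct (Pf_spec a k t' Ha H') as [B' E'].
  destruct (Rle_or_lt t t').
  - destruct (mono a k t t' _ _ Ha B B' E E') as [h1 [h2|h2]]; auto; rewrite ?h2; split_Rabs; lra.
  - destruct (mono a k t' t _ _ Ha B' B E' E) as [h1 [h2|h2]]; try lra; rewrite ?h2; split_Rabs; lra.
Qed.

Definition clamp t := Rmax (-(PI/2)) (Rmin t PI).

Lemma clamp_lip t t' : Rabs (clamp t - clamp t') <= Rabs (t - t').
Proof. unfold clamp, Rmax, Rmin. repeat destruct Rle_dec; split_Rabs; lra. Qed.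

Lemma clamp_range t : -(PI/2) <= clamp t <= PI.
Proof. assert (PI > 0) by apply PI_RGT_0. unfold clamp, Rmax, Rmin. repeat destruct Rle_dec; lra. Qed.

Lemma clamp_id t : -(PI/2) <= t <= PI -> clamp t = t.
Proof. unfold clamp, Rmax, Rmin. intros. repeat destruct Rle_dec; lra. Qed.

Lemma exist_pos a km kn : 0 < a -> 0 <= km -> 0 <= kn ->
  exists y M N, 0 < y < PI/2 /\ 0 < M < PI/2 /\ 0 < N < PI/2 /\
   (3*y + (km+kn) + (-y+M+N)) * tan y = a /\
   (3*M + km - (-y+M+N)) * tan M = a /\ (3*N + kn - (-y+M+N)) * tan N = a.
Proof.
  intros Ha Hm Hn. assert (PI > 0) by apply PI_RGT_0.
  set (phi := fun t => - Pf a (km+kn) (- clamp t) + Pf a km (clamp t) + Pf a kn (clamp t) - clamp t).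
  assert (Hc : continuity phi).
  { apply (lip_cont _ 2); [lra|]. intros t t'. unfold phi.
    assert (h0 := clamp_lip t t'). pose proof (clamp_range t). pose proof (clamp_range t').
    assert (h1 := Pf_lip a (km+kn) (- clamp t) (- clamp t') Ha ltac:(lra) ltac:(lra)).
    assert (h2 := Pf_lip a km (clamp t) (clamp t') Ha ltac:(lra) ltac:(lra)).
    assert (h3 := Pf_lip a kn (clamp t) (clamp t') Ha ltac:(lra) ltac:(lra)).
    replace (- clamp t - - clamp t') with (-(clamp t - clamp t')) in h1 by ring.
    rewrite Rabs_Ropp in h1. split_Rabs; lra. }
  assert (Hc' : continuity (fun t => - phi t)) by (apply continuity_opp; exact Hc).
  assert (S1 : forall u, -(PI/2) <= u <= PI ->
     0 < Pf a (km+kn) (-u) < PI/2 /\ (3*Pf a (km+kn) (-u)+(km+kn)-(-u))*tan (Pf a (km+kn) (-u)) = a)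
     by (intros; apply Pf_spec; lra).
  assert (S2 : forall u, -(PI/2) <= u <= PI ->
     0 < Pf a km u < PI/2 /\ (3*Pf a km u+km-u)*tan (Pf a km u) = a)
     by (intros; apply Pf_spec; lra).
  assert (S3 : forall u, -(PI/2) <= u <= PI ->
     0 < Pf a kn u < PI/2 /\ (3*Pf a kn u+kn-u)*tan (Pf a kn u) = a)
     by (intros; apply Pf_spec; lra).
  assert (lo : (fun t => - phi t) (-(PI/2)) < 0).
  { simpl. unfold phi. rewrite clamp_id by lra.
    destruct (S1 (-(PI/2))) as [[? ?] _]; [lra|].
    destruct (S2 (-(PI/2))) as [[? ?] _]; [lra|].
    destruct (S3 (-(PI/2))) as [[? ?] _]; [lra|]. lra. }
  assert (hi : 0 < (fun t => - phi t) PI).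
  { simpl. unfold phi. rewrite clamp_id by lra.
    destruct (S1 PI) as [[? ?] _]; [lra|].
    destruct (S2 PI) as [[? ?] _]; [lra|].
    destruct (S3 PI) as [[? ?] _]; [lra|]. lra. }
  destruct (IVT _ (-(PI/2)) PI Hc' ltac:(lra) lo hi) as [t [Ht Hz]].
  unfold phi in Hz. rewrite clamp_id in Hz by lra.
  destruct (S1 t Ht) as [B1 E1]. destruct (S2 t Ht) as [B2 E2]. destruct (S3 t Ht) as [B3 E3].
  exists (Pf a (km+kn) (-t)), (Pf a km t), (Pf a kn t).
  replace (- Pf a (km+kn) (-t) + Pf a km t + Pf a kn t) with t by lra.
  repeat split; try lra.
  all: try (rewrite <- E1; f_equal; ring).
Qed.

Lemma uniq_core a km kn y M N y' M' N' : 0 < a ->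
   0 < y < PI/2 -> 0 < M < PI/2 -> 0 < N < PI/2 ->
   (3*y + (km+kn) - (-(-y+M+N))) * tan y = a ->
   (3*M + km - (-y+M+N)) * tan M = a -> (3*N + kn - (-y+M+N)) * tan N = a ->
   0 < y' < PI/2 -> 0 < M' < PI/2 -> 0 < N' < PI/2 ->
   (3*y' + (km+kn) - (-(-y'+M'+N'))) * tan y' = a ->
   (3*M' + km - (-y'+M'+N')) * tan M' = a -> (3*N' + kn - (-y'+M'+N')) * tan N' = a ->
   (-y+M+N) <= (-y'+M'+N') -> y = y' /\ M = M' /\ N = N'.
Proof.
  intros Ha B1 B2 B3 E1 E2 E3 B1' B2' B3' E1' E2' E3' Hle.
  set (t := -y+M+N) in *. set (t' := -y'+M'+N') in *.
  assert (Ht : t = t').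
  { destruct (mono a km t t' M M' Ha B2 B2' E2 E2' Hle) as [a1 a2].
    destruct (mono a kn t t' N N' Ha B3 B3' E3 E3' Hle) as [b1 b2].
    destruct (mono a (km+kn) (-t') (-t) y' y Ha B1' B1 E1' E1 ltac:(lra)) as [c1 c2].
    unfold t, t' in *. destruct a2; destruct b2; destruct c2; lra. }
  rewrite <- Ht in E1', E2', E3'.
  destruct (mono a km t t M M' Ha B2 B2' E2 E2' ltac:(lra)) as [a1 _].
  destruct (mono a km t t M' M Ha B2' B2 E2' E2 ltac:(lra)) as [a1' _].
  destruct (mono a kn t t N N' Ha B3 B3' E3 E3' ltac:(lra)) as [b1 _].
  destruct (mono a kn t t N' N Ha B3' B3 E3' E3 ltac:(lra)) as [b1' _].
  unfold t, t' in *. repeat split; lra.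
Qed.

Lemma sys_form r m n s L M N : 0 < 3*r*s -> in_range L M N -> sys r m n s L M N ->
  0 < -L < PI/2 /\ 0 < M < PI/2 /\ 0 < N < PI/2 /\
  (3*(-L) + (INR m * PI + INR n * PI) - (-(-(-L)+M+N))) * tan (-L) = 3*r*s /\
  (3*M + INR m * PI - (-(-L)+M+N)) * tan M = 3*r*s /\
  (3*N + INR n * PI - (-(-L)+M+N)) * tan N = 3*r*s.
Proof.
  intros Ha [R1 [R2 R3]] [E1 [E2 E3]].
  assert (L <> 0) by (intro; subst; rewrite tan_0 in E1; lra).
  assert (M <> 0) by (intro; subst; rewrite tan_0 in E2; lra).
  assert (N <> 0) by (intro; subst; rewrite tan_0 in E3; lra).
  repeat split; try lra.
  all: try (rewrite tan_neg, <- E1; ring).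
  all: try (rewrite <- E2; f_equal; ring).
  all: try (rewrite <- E3; f_equal; ring).
Qed.

Lemma zero_uniq r m n L M N : in_range L M N -> sys r m n 0 L M N -> L = 0 /\ M = 0 /\ N = 0.
Proof.
  intros [R1 [R2 R3]] [E1 [E2 E3]]. rewrite Rmult_0_r in E1, E2, E3.
  assert (PI > 0) by apply PI_RGT_0.
  assert (0 <= INR m * PI) by (apply Rmult_le_pos; [apply pos_INR|lra]).
  assert (0 <= INR n * PI) by (apply Rmult_le_pos; [apply pos_INR|lra]).
  assert (HL : L = 0).
  { apply Rmult_integral in E1. destruct E1 as [e|e]; [nra|].
    destruct (Req_dec L 0); [assumption|]. assert (tan L < 0) by (apply tan_lt_0; lra). lra. }
  subst L.
  assert (HM : 2*M - N - 0 + INR m * PI = 0 \/ M = 0).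
  { apply Rmult_integral in E2. destruct E2 as [e|e]; [left; assumption|right].
    destruct (Req_dec M 0); [assumption|]. assert (0 < tan M) by (apply tan_pos; lra). lra. }
  assert (HN : 2*N - 0 - M + INR n * PI = 0 \/ N = 0).
  { apply Rmult_integral in E3. destruct E3 as [e|e]; [left; assumption|right].
    destruct (Req_dec N 0); [assumption|]. assert (0 < tan N) by (apply tan_pos; lra). lra. }
  destruct HM; destruct HN; repeat split; lra.
Qed.

Lemma sq_bound x B : 0 <= B -> x * x <= B -> Rabs x <= sqrt B.
Proof. intros. rewrite <- sqrt_Rsqr_abs. apply sqrt_le_1_alt. unfold Rsqr. lra. Qed.

Theorem lemma8p1 (r : R) (hr : 0 < r) :
  (forall (m n : nat) (s : R), (m <= n)%nat -> 0 <= s ->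
     exists L M N, in_range L M N /\ sys r m n s L M N /\
       forall L' M' N', in_range L' M' N' -> sys r m n s L' M' N' ->
         L' = L /\ M' = M /\ N' = N) /\
  (exists C : R, forall (m n : nat) (s L M N : R), (m < n)%nat -> 0 < s ->
     in_range L M N -> sys r m n s L M N ->
     Rabs L <= C * (s / INR n) /\ Rabs N <= C * (s / INR n)) /\
  (exists C : R, forall (m n : nat) (s L M N : R), (1 <= m)%nat -> (m <= n)%nat ->
     0 < s -> in_range L M N -> sys r m n s L M N ->
     Rabs M <= C * (s / INR m)) /\
  (exists C delta : R, 0 < delta /\ forall (n : nat) (s L M N : R), (0 < n)%nat ->
     0 < s < delta -> in_range L M N -> sys r 0 n s L M N ->
     Rabs M <= C * sqrt s) /\
  (exists C : R, forall (s L M N : R), 0 <= s ->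
     in_range L M N -> sys r 0 0 s L M N ->
     Rabs L <= C * sqrt s /\ Rabs M <= C * sqrt s /\ Rabs N <= C * sqrt s).
Proof.
  assert (HPI : PI > 3) by (generalize PI2_3_2; lra).
  split; [|split; [|split; [|split]]].
  - intros m n s Hmn Hs.
    assert (0 <= INR m * PI) by (apply Rmult_le_pos; [apply pos_INR|lra]).
    assert (0 <= INR n * PI) by (apply Rmult_le_pos; [apply pos_INR|lra]).
    destruct (Req_dec s 0) as [->|Hs0].
    + exists 0, 0, 0. split; [unfold in_range; lra|]. split.
      * unfold sys. rewrite tan_0. repeat split; ring.
      * intros L' M' N' H1 H2. apply (zero_uniq r m n); assumption.
    + assert (Ha : 0 < 3*r*s) by nra.
      destruct (exist_pos (3*r*s) (INR m * PI) (INR n * PI) Ha ltac:(lra) ltac:(lra))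
        as [y [M [N [B1 [B2 [B3 [E1 [E2 E3]]]]]]]].
      assert (Hin : in_range (-y) M N) by (unfold in_range; lra).
      assert (Hsys : sys r m n s (-y) M N).
      { unfold sys. repeat split.
        - rewrite tan_neg, <- E1. ring.
        - rewrite <- E2. f_equal. ring.
        - rewrite <- E3. f_equal. ring. }
      exists (-y), M, N. split; [assumption|split; [assumption|]].
      intros L' M' N' H1 H2.
      destruct (sys_form r m n s _ _ _ Ha Hin Hsys) as [A1 [A2 [A3 [F1 [F2 F3]]]]].
      destruct (sys_form r m n s _ _ _ Ha H1 H2) as [A1' [A2' [A3' [F1' [F2' F3']]]]].
      destruct (Rle_or_lt (- - - y + M + N) (- - L' + M' + N')).
      * destruct (uniq_core _ _ _ _ _ _ _ _ _ Ha A1 A2 A3 F1 F2 F3 A1' A2' A3' F1' F2' F3' ltac:(lra))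
          as [? [? ?]]. repeat split; lra.
      * destruct (uniq_core _ _ _ _ _ _ _ _ _ Ha A1' A2' A3' F1' F2' F3' A1 A2 A3 F1 F2 F3 ltac:(lra))
          as [? [? ?]]. repeat split; lra.
  - exists (3*r). intros m n s L M N Hmn Hs [R1 [R2 R3]] [E1 [E2 E3]].
    assert (Hn : 1 <= INR n) by (apply (le_INR 1); lia).
    assert (Hm : 0 <= INR m) by apply pos_INR.
    replace (3 * r * (s / INR n)) with (3*r*s / INR n) by (field; lra).
    split; apply le_div_aux; try lra.
    + set (u := -L). set (T := - tan L).
      assert (u <= T) by (unfold u, T; generalize (tan_le_x L ltac:(lra)); lra).
      set (K := (INR m + INR n) * PI) in *.
      assert (INR n <= K) by (unfold K; nra).
      assert (E : (2*u + M + N + K) * T = 3*r*s) by (rewrite <- E1; unfold u, T; ring).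
      rewrite Rabs_left1 by lra. fold u.
      assert (0 <= u) by (unfold u; lra).
      assert (0 <= (2*u+M+N) * T) by (apply Rmult_le_pos; lra).
      assert (INR n * u <= INR n * T) by (apply Rmult_le_compat_l; lra).
      assert (INR n * T <= K * T) by (apply Rmult_le_compat_r; lra).
      nra.
    + assert (T := tan_ge_x N ltac:(lra)).
      assert (INR n <= 2*N - L - M + INR n * PI) by nra.
      rewrite Rabs_pos_eq by lra. nra.
  - exists (3*r). intros m n s L M N Hm1 Hmn Hs [R1 [R2 R3]] [E1 [E2 E3]].
    assert (Hm : 1 <= INR m) by (apply (le_INR 1); lia).
    replace (3 * r * (s / INR m)) with (3*r*s / INR m) by (field; lra).
    apply le_div_aux; try lra.
    assert (T := tan_ge_x M ltac:(lra)).
    assert (INR m <= 2*M - N - L + INR m * PI) by nra.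
    rewrite Rabs_pos_eq by lra. nra.
  - exists (3*r + sqrt (3*r)), 1. split; [lra|].
    intros n s L M N Hn0 [Hs Hs1] [R1 [R2 R3]] [E1 [E2 E3]].
    simpl INR in E2.
    assert (Hn : 1 <= INR n) by (apply (le_INR 1); lia).
    assert (Hsq : 0 <= sqrt s) by apply sqrt_pos.
    assert (Hsq1 : s <= sqrt s).
    { assert (sqrt s <= 1) by (rewrite <- sqrt_1; apply sqrt_le_1_alt; lra).
      pose proof (sqrt_sqrt s ltac:(lra)). nra. }
    assert (Hr3 : 0 <= sqrt (3*r)) by apply sqrt_pos.
    rewrite Rabs_pos_eq by lra.
    destruct (Rle_or_lt M N).
    + assert (T := tan_ge_x N ltac:(lra)).
      assert (INR n <= 2*N - L - M + INR n * PI) by nra.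
      assert (N * INR n <= 3*r*s) by nra.
      assert (N <= 3*r*s) by nra.
      nra.
    + assert (T := tan_ge_x M ltac:(lra)).
      assert (M * M <= 3*r*s) by nra.
      assert (Rabs M <= sqrt (3*r*s)) by (apply sq_bound; nra).
      rewrite sqrt_mult in H1 by lra. rewrite Rabs_pos_eq in H1 by lra. nra.
  - exists (sqrt (3*r)). intros s L M N Hs [R1 [R2 R3]] [E1 [E2 E3]].
    simpl INR in E1, E2, E3.
    assert (H3 : 0 <= 3*r*s) by nra.
    assert (Hb : forall x, x * x <= 3*r*s -> Rabs x <= sqrt (3*r) * sqrt s).
    { intros x Hx. rewrite <- sqrt_mult by lra. apply sq_bound; assumption. }
    assert (TM := tan_ge_x M ltac:(lra)). assert (TN := tan_ge_x N ltac:(lra)).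
    assert (TL := tan_le_x L ltac:(lra)).
    split; [|split]; apply Hb.
    + nra.
    + destruct (Rle_or_lt N M); nra.
    + destruct (Rle_or_lt N M); nra.
Qed.
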